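(* Let $(\Lambda,d)$ be a finitely aligned $k$-graph and give $X_\Lambda$ the topology generated by the subbasis $\{D_F,X_\Lambda\setminus D_F:F\in S_\Lambda\}$. Then for each $v\in\Lambda^0$, $D_v:=D_{\{(v,v)\}}=\{x\in X_\Lambda: r(x)=v\}$ is compact; in particular $X_\Lambda$ is a locally compact Hausdorff space.
   Context: A $k$-graph $(\Lambda,d)$ is a countable small category $\Lambda$ (objects identified with identity morphisms) with a functor $d:\Lambda\to\mathbb N^k$ satisfying unique factorization: whenever $d(\lambda)=m+n$ there are unique $\mu,\nu$ with $d(\mu)=m$, $d(\nu)=n$, $\lambda=\mu\nu$. $\Lambda^0=d^{-1}(0)$, $r,s$ range/source. $\Lambda^{\min}(\lambda,\mu)=\{(\alpha,\beta):\lambda\alpha=\mu\beta,\ d(\lambda\alpha)=d(\lambda)\vee d(\mu)\}$; finitely aligned means all are finite. $S_\Lambda$ is the set of finite $F\subseteq\{(\lambda,\mu):s(\lambda)=s(\mu)\}$ such that distinct $(\lambda,\mu),(\nu,\omega)\in F$ satisfy $\Lambda^{\min}(\lambda,\nu)=\Lambda^{\min}(\mu,\omega)=\emptyset$. $\Omega_{k,m}$ ($m\in(\mathbb N\cup\{\infty\})^k$): objects $\{p\in\mathbb N^k:p\le m\}$, morphisms $(p,q)$ with $p\le q\le m$, $r(p,q)=p$, $s(p,q)=q$, $d(p,q)=q-p$. $X_\Lambda$ = all degree-preserving functors $x:\Omega_{k,m}\to\Lambda$; $d(x)=m$, $r(x)=x(0,0)$. $D_F=\{x\in X_\Lambda:\exists(\lambda,\mu)\in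 F,\ d(\mu)\le d(x),\ x(0,d(\mu))=\mu\}$. This subbasis generates a Hausdorff topology. *)

(* Defs.v *)
From HB Require Import structures.
From mathcomp Require Import all_boot all_order.
From mathcomp Require Import boolp classical_sets cardinality topology.

Set Implicit Arguments.
Unset Strict Implicit.
Unset Printing Implicit Defensive.

Local Open Scope classical_set_scope.

Definition degk (k : nat) := 'I_k -> nat.
Definition degk0 (k : nat) : degk k := fun _ => 0.
Definition degk_add k (m n : degk k) : degk k := fun i => m i + n i.
Definition degk_join k (m n : degk k) : degk k := fun i => maxn (m i) (n i).
Definition degk_le k (m n : degk k) : Prop := forall i, m i <= n i.

(** Elements of (N ∪ {∞})^k : None stands for ∞. *)
Definition extdeg (k : nat) := 'I_k -> option nat.
Definition degk_le_ext k (q : degk k) (m : extdeg k) : Prop :=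
  forall i, match m i with Some mi => q i <= mi | None => true end.

(** A k-graph: a countable small category whose objects are identified with
    the identity morphisms (the morphisms [v] with [r v = v = s v]),
    with composition [kc] (only meaningful on composable pairs, [s mu = r nu]),
    and a degree functor [kd] into N^k with the unique factorisation
    property. *)
Record kgraph (k : nat) := KGraph {
  Mor :> countType;
  kr : Mor -> Mor;
  ks : Mor -> Mor;
  kc : Mor -> Mor -> Mor;
  kd : Mor -> degk k;
  kr_obj : forall l, kr (kr l) = kr l /\ ks (kr l) = kr l;
  ks_obj : forall l, kr (ks l) = ks l /\ ks (ks l) = ks l;
  kc_idl : forall l, kc (kr l) l = l;
  kc_idr : forall l, kc l (ks l) = l;
  kc_r : forall m n, ks m = kr n -> kr (kc m n) = kr m;
  kc_s : forall m n, ks m = kr n -> ks (kc m n) = ks n;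
  kc_assoc : forall a b c, ks a = kr b -> ks b = kr c ->
    kc (kc a b) c = kc a (kc b c);
  kd_id : forall v, kr v = v -> ks v = v -> forall i, kd v i = 0;
  kd_comp : forall m n, ks m = kr n -> forall i, kd (kc m n) i = kd m i + kd n i;
  k_factor : forall l (m n : degk k), (forall i, kd l i = m i + n i) ->
    exists! mn : Mor * Mor,
      [/\ ks mn.1 = kr mn.2, (forall i, kd mn.1 i = m i),
          (forall i, kd mn.2 i = n i) & l = kc mn.1 mn.2]
}.

Section KGraphDefs.
Context {k : nat} (L : kgraph k).

Definition vertex (v : L) : Prop := forall i, kd v i = 0.

Definition Lmin (l m : L) : set (L * L) :=
  [set ab | [/\ ks l = kr ab.1, ks m = kr ab.2, kc l ab.1 = kc m ab.2 &
            kd (kc l ab.1) = degk_join (kd l) (kd m)]].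

Definition finitely_aligned : Prop := forall l m : L, finite_set (Lmin l m).

(** S_Λ : finite sets F of pairs with common source, distinct elements
    having empty Λ^min in both coordinates.  Finite sets are given as lists. *)
Definition in_S (F : seq (L * L)) : Prop :=
  (forall lm, lm \in F -> ks lm.1 = ks lm.2) /\
  (forall a b, a \in F -> b \in F -> a != b ->
     Lmin a.1 b.1 = set0 /\ Lmin a.2 b.2 = set0).

(** Degree-preserving functors x : Ω_{k,m} → Λ, encoded by m and the
    partial map (p, q) ↦ x(p, q), defined exactly when p ≤ q ≤ m. *)
Definition is_kpath (xm : extdeg k * (degk k -> degk k -> option L)) : Prop :=
  let: (m, f) := xm in
  [/\ (forall p q, (exists l, f p q = Some l) <-> (degk_le p q /\ degk_le_ext q m)),
      (forall p q l, f p q = Some l -> forall i, kd l i = q i - p i),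
      (forall p q l, f p q = Some l -> f p p = Some (kr l) /\ f q q = Some (ks l))
    & (forall p q t a b, f p q = Some a -> f q t = Some b -> f p t = Some (kc a b))].

Record XL := XPath {
  xdeg : extdeg k;
  xfun : degk k -> degk k -> option L;
  xpath : is_kpath (xdeg, xfun) }.

Definition xrange_is (x : XL) (v : L) : Prop := xfun x (@degk0 k) (@degk0 k) = Some v.

Definition DF (F : seq (L * L)) : set XL :=
  [set x | exists2 lm, lm \in F &
     degk_le_ext (kd lm.2) (xdeg x) /\ xfun x (@degk0 k) (kd lm.2) = Some lm.2].

Definition subbasis_index : set (option (bool * seq (L * L))) :=
  [set i | exists b F, i = Some (b, F) /\ in_S F].

Definition subbasis_set (i : option (bool * seq (L * L))) : set XL :=
  match i with
  | Some (true, F) => DF F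
  | Some (false, F) => ~` DF F
  | None => set0
  end.

End KGraphDefs.

HB.instance Definition _ k (L : kgraph k) := gen_eqMixin (XL L).
HB.instance Definition _ k (L : kgraph k) := gen_choiceMixin (XL L).
HB.instance Definition _ k (L : kgraph k) :=
  isSubBaseTopological.Build (XL L) (@subbasis_index k L) (@subbasis_set k L).

(* Main.v *)
Require Import Defs.
From HB Require Import structures.
From mathcomp Require Import all_boot all_order.
From mathcomp Require Import boolp classical_sets cardinality topology.
From mathcomp Require Import finmap.

Set Implicit Arguments.
Unset Strict Implicit.
Unset Printing Implicit Defensive.
Local Open Scope classical_set_scope.

Section Paths.
Variables (k : nat) (L : kgraph k).
Implicit Types (x y z : XL L) (p q t n : degk k) (l a b c : L).

Local Notation z0 := (@degk0 k).

Lemma le_refl p : degk_le p p. Proof. by move=> i. Qed.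
Lemma le_trans p q t : degk_le p q -> degk_le q t -> degk_le p t.
Proof. by move=> h1 h2 i; apply: leq_trans (h1 i) (h2 i). Qed.
Lemma le0 p : degk_le z0 p. Proof. by []. Qed.
Lemma le_ext_trans p q (m : extdeg k) :
  degk_le p q -> degk_le_ext q m -> degk_le_ext p m.
Proof. move=> h1 h2 i; move: (h2 i); case: (m i) => // mi; exact: leq_trans. Qed.

Lemma xdefP x p q : (exists l, xfun x p q = Some l) <->
  degk_le p q /\ degk_le_ext q (xdeg x).
Proof. by case: x => m f [H1 ? ? ?]; apply: H1. Qed.
Lemma xdeg_kd x p q l : xfun x p q = Some l -> forall i, kd l i = q i - p i.
Proof. by case: x => m f [? H2 ? ?]; apply: H2. Qed.
Lemma xrs x p q l : xfun x p q = Some l ->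
  xfun x p p = Some (kr l) /\ xfun x q q = Some (ks l).
Proof. by case: x => m f [? ? H3 ?]; apply: H3. Qed.
Lemma xcomp x p q t a b : xfun x p q = Some a -> xfun x q t = Some b ->
  xfun x p t = Some (kc a b).
Proof. by case: x => m f [? ? ? H4]; apply: H4. Qed.

Lemma fact_uniq (m n : degk k) a1 b1 a2 b2 : ks a1 = kr b1 -> ks a2 = kr b2 ->
  (forall i, kd a1 i = m i) -> (forall i, kd b1 i = n i) ->
  (forall i, kd a2 i = m i) -> (forall i, kd b2 i = n i) ->
  kc a1 b1 = kc a2 b2 -> a1 = a2 /\ b1 = b2.
Proof.
move=> s1 s2 da1 db1 da2 db2 e.
have hd : forall i, kd (kc a1 b1) i = m i + n i by move=> i; rewrite kd_comp // da1 db1.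
have [[u w] [_ uq]] := k_factor hd.
have E1 := uq (a1, b1) (And4 s1 da1 db1 erefl).
have E2 := uq (a2, b2) (And4 s2 da2 db2 e).
by rewrite E1 in E2; case: E2 => -> ->.
Qed.

Lemma seg x y p q t c : xfun x p t = Some c -> xfun y p t = Some c ->
  degk_le p q -> degk_le q t -> xfun x p q = xfun y p q /\ xfun x q t = xfun y q t.
Proof.
move=> hx hy pq qt.
have [_ tx] : degk_le p t /\ degk_le_ext t (xdeg x) by apply/xdefP; exists c.
have [_ ty] : degk_le p t /\ degk_le_ext t (xdeg y) by apply/xdefP; exists c.
have [a ha] : exists a, xfun x p q = Some a.
  by apply/xdefP; split=> //; exact: le_ext_trans qt tx.
have [b hb] : exists b, xfun x q t = Some b by apply/xdefP.
have [a' ha'] : exists a, xfun y p q = Some a.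
  by apply/xdefP; split=> //; exact: le_ext_trans qt ty.
have [b' hb'] : exists b, xfun y q t = Some b by apply/xdefP.
have ec : c = kc a b by have := xcomp ha hb; rewrite hx => -[].
have ec' : c = kc a' b' by have := xcomp ha' hb'; rewrite hy => -[].
have s1 : ks a = kr b.
  by have [_ e1] := xrs ha; have [e2 _] := xrs hb; rewrite e1 in e2; case: e2.
have s2 : ks a' = kr b'.
  by have [_ e1] := xrs ha'; have [e2 _] := xrs hb'; rewrite e1 in e2; case: e2.
have [E1 E2] := fact_uniq (m := fun i => q i - p i) (n := fun i => t i - q i)
  s1 s2 (xdeg_kd ha) (xdeg_kd hb) (xdeg_kd ha') (xdeg_kd hb') (etrans (esym ec) ec').
by rewrite ha hb ha' hb' E1 E2.
Qed.

Lemma Sg x y n rho p q : xfun x z0 n = Some rho -> xfun y z0 n = Some rho ->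
  degk_le p q -> degk_le q n -> xfun x p q = xfun y p q.
Proof.
move=> hx hy pq qn.
have pn := le_trans pq qn.
have [_ e] := seg hx hy (le0 p) pn.
have [_ nx] : degk_le z0 n /\ degk_le_ext n (xdeg x) by apply/xdefP; exists rho.
have [c hc] : exists c, xfun x p n = Some c by apply/xdefP.
by have [e' _] := seg hc (etrans (esym e) hc) pq qn.
Qed.

Definition D1 (mu : L) : set (XL L) := DF [:: (mu, mu)].

Lemma D1E x mu : D1 mu x <->
  degk_le_ext (kd mu) (xdeg x) /\ xfun x z0 (kd mu) = Some mu.
Proof.
split; first by case=> lm; rewrite inE => /eqP ->.
by move=> h; exists (mu, mu) => //; rewrite inE.
Qed.

Lemma DFE F x : DF F x <-> exists2 lm, lm \in F & D1 lm.2 x.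
Proof.
by split => -[lm lF h]; exists lm => //; [apply/D1E|move/D1E: h].
Qed.

Lemma kd_x0 x q l : xfun x z0 q = Some l -> kd l = q.
Proof. by move=> h; apply/funext => i; rewrite (xdeg_kd h) /degk0 subn0. Qed.

Lemma D1_x0 x q l : xfun x z0 q = Some l -> D1 l x.
Proof.
move=> h; apply/D1E; rewrite (kd_x0 h); split => //.
have : exists l', xfun x z0 q = Some l' by exists l.
by move/xdefP => [].
Qed.

Lemma ext_fun x y : (forall mu, D1 mu x -> D1 mu y) ->
  forall p q l, xfun x p q = Some l -> xfun y p q = Some l.
Proof.
move=> h p q l hl.
have [pq qm] : degk_le p q /\ degk_le_ext q (xdeg x) by apply/xdefP; exists l.
have [c hc] : exists c, xfun x z0 q = Some c by apply/xdefP.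
have /D1E [_] := h _ (D1_x0 hc); rewrite (kd_x0 hc) => hc'.
by rewrite -(Sg hc hc' pq (le_refl q)).
Qed.

Lemma ext_deg x y : (forall mu, D1 mu x -> D1 mu y) ->
  forall q, degk_le_ext q (xdeg x) -> degk_le_ext q (xdeg y).
Proof.
move=> h q qm.
have [c hc] : exists c, xfun x z0 q = Some c by apply/xdefP.
have : exists l', xfun y z0 q = Some l' by exists c; apply: (ext_fun h); exact: hc.
by move/xdefP => [].
Qed.

Lemma ext x y : (forall mu, D1 mu x <-> D1 mu y) -> x = y.
Proof.
move=> h.
have hxy : forall mu, D1 mu x -> D1 mu y by move=> mu /h.
have hyx : forall mu, D1 mu y -> D1 mu x by move=> mu /h.
have edeg : xdeg x = xdeg y.
  apply/funext => i.
  pose e (n : nat) : degk k := fun j => if j == i then n else 0.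
  have eP (m' : extdeg k) (n : nat) : degk_le_ext (e n) m' <->
      (match m' i with Some mi => n <= mi | None => true end : bool).
    split; first by move=> H; move: (H i); rewrite /e /=; case: (m' i) => // mi; rewrite eqxx.
    move=> H j; rewrite /e /=; case: (eqVneq j i) => [->|_]; last by case: (m' j).
    by move: H; case: (m' i) => // mi; rewrite eqxx.
  have A (n : nat) : (match xdeg x i with Some mi => n <= mi | None => true end) ->
             (match xdeg y i with Some mi => n <= mi | None => true end).
    by move=> H; exact: ((eP (xdeg y) n).1 (ext_deg hxy ((eP (xdeg x) n).2 H))).
  have B (n : nat) : (match xdeg y i with Some mi => n <= mi | None => true end) ->
             (match xdeg x i with Some mi => n <= mi | None => true end).
    by move=> H; exact: ((eP (xdeg x) n).1 (ext_deg hyx ((eP (xdeg y) n).2 H))).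
  move: A B; case: (xdeg x i) => [a|]; case: (xdeg y i) => [b|] // A B.
  - by congr Some; apply/eqP; rewrite eqn_leq (A a (leqnn a)) (B b (leqnn b)).
  - by have := B a.+1 isT; rewrite ltnn.
  - by have := A b.+1 isT; rewrite ltnn.
have efun : xfun x = xfun y.
  apply/funext => p; apply/funext => q.
  case Hx: (xfun x p q) => [l|]; first by rewrite (ext_fun hxy Hx).
  case Hy: (xfun y p q) => [l|] //.
  by rewrite (ext_fun hyx Hy) in Hx.
case: x hxy hyx edeg efun h => mx fx px; case: y => my fy py /= _ _ em ef _.
subst; by rewrite (Prop_irrelevance px py).
Qed.

Lemma nbhs_sub (x : XL L) (A : set (XL L)) : nbhs x A ->
  exists E : {fset option (bool * seq (L * L))}, {subset E <= subbasis_index (L:=L)} /\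
  (\bigcap_(i in [set` E]) subbasis_set (L:=L) i) x /\
  (\bigcap_(i in [set` E]) subbasis_set (L:=L) i) `<=` A.
Proof.
move=> [B [[D' sD' <-] [b Db bx] sBA]].
have [E sE bE] := sD' _ Db.
exists E; split => //; rewrite bE; split => // y yb; apply: sBA; exists b => //.
Qed.

Lemma sub_open i : subbasis_index (L:=L) i -> open (subbasis_set (L:=L) i).
Proof.
move=> Di.
exists [set subbasis_set (L:=L) i].
  by move=> _ ->; apply: finI_from1.
by rewrite bigcup_set1.
Qed.

Lemma D1_in_S (mu : L) : in_S [:: (mu, mu)].
Proof.
split; first by move=> lm; rewrite inE => /eqP ->.
by move=> a0 b0; rewrite !inE => /eqP -> /eqP ->; rewrite eqxx.
Qed.

Lemma D1_open (mu : L) : open (D1 mu).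
Proof.
apply: (@sub_open (Some (true, [:: (mu, mu)]))).
by exists true, [:: (mu, mu)]; split => //; exact: D1_in_S.
Qed.

Lemma D1C_open (mu : L) : open (~` D1 mu).
Proof.
apply: (@sub_open (Some (false, [:: (mu, mu)]))).
by exists false, [:: (mu, mu)]; split => //; exact: D1_in_S.
Qed.

Lemma hausdorffX : hausdorff_space (XL L).
Proof.
move=> x y cl; apply: ext => mu; split => hm; apply: contrapT => hm'.
- have [z [za zb]] := cl _ _ (open_nbhs_nbhs (conj (D1_open mu) hm))
    (open_nbhs_nbhs (conj (D1C_open mu) hm')).
  exact: zb za.
- have [z [za zb]] := cl _ _ (open_nbhs_nbhs (conj (D1C_open mu) hm'))
    (open_nbhs_nbhs (conj (D1_open mu) hm)).
  exact: za zb.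
Qed.

End Paths.

Section Compact.
Variables (k : nat) (L : kgraph k) (FA : finitely_aligned L).
Variables (U : set_system (XL L)) (UU : UltraFilter U) (v : L) (Uv : U (D1 v)).
Implicit Types (x y z : XL L) (p q t n : degk k) (l a b c r : L).
Local Notation z0 := (@degk0 k).

Let PU : ProperFilter U := ultra_proper.

Definition G (mu : L) := U (D1 mu).

Lemma Gne (mu : L) : G mu -> exists y, D1 mu y.
Proof. exact: filter_ex. Qed.

Lemma Gcommon r1 r2 : G r1 -> G r2 -> exists y, D1 r1 y /\ D1 r2 y.
Proof. by move=> h1 h2; have [y [] ] := filter_ex (filterI h1 h2); exists y. Qed.

Lemma ultra_union (T : eqType) (s : seq T) (f : T -> set (XL L)) :
  U [set y | exists2 i, i \in s & f i y] -> exists2 i, i \in s & U (f i).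
Proof.
elim: s => [|a0 s IH] h.
  exfalso; apply: (filter_not_empty U); apply: filterS h => y [i].
  by rewrite in_nil.
have [ha|hc] := in_ultra_setVsetC (f a0) UU.
  by exists a0 => //; rewrite inE eqxx.
have [i iS fi] : exists2 i, i \in s & U (f i).
  apply: IH; apply: filterS (filterI h hc) => y [[i]].
  rewrite inE => /orP [/eqP -> fay /(_ fay) []| iS fiy _]; by exists i.
by exists i => //; rewrite inE iS orbT.
Qed.

Lemma ultra_inter (T : eqType) (s : seq T) (f : T -> set (XL L)) :
  (forall i, i \in s -> U (f i)) -> U [set y | forall i, i \in s -> f i y].
Proof.
elim: s => [|a0 s IH] h.
  by apply: filterS filterT => y _ i; rewrite in_nil.
have h2 : forall i, i \in s -> U (f i) by move=> i iS; apply: h; rewrite inE iS orbT.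
apply: filterS (filterI (h a0 (mem_head a0 s)) (IH h2)) => y [fa fs] i.
by rewrite inE => /orP [/eqP -> //| /fs].
Qed.

Lemma Gjoin r1 r2 : G r1 -> G r2 ->
  exists2 r, G r & kd r = degk_join (kd r1) (kd r2).
Proof.
move=> h1 h2.
have [s es] := (finite_seqP _).1 (FA r1 r2).
pose f (ab : L * L) := D1 (kc r1 ab.1).
have : U [set y | exists2 i, i \in s & f i y].
  apply: filterS (filterI h1 h2) => y [/D1E [d1 e1] /D1E [d2 e2]].
  set n := degk_join (kd r1) (kd r2).
  have nm : degk_le_ext n (xdeg y).
    move=> i; move: (d1 i) (d2 i); rewrite /n /degk_join.
    by case: (xdeg y i) => // mi; rewrite geq_max => -> ->.
  have le1 : degk_le (kd r1) n by move=> i; exact: leq_maxl.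
  have le2 : degk_le (kd r2) n by move=> i; exact: leq_maxr.
  have [c hc] : exists c, xfun y z0 n = Some c by apply/xdefP.
  have [a ha] : exists a, xfun y (kd r1) n = Some a by apply/xdefP.
  have [b hb] : exists b, xfun y (kd r2) n = Some b by apply/xdefP.
  have ca : c = kc r1 a by have := xcomp e1 ha; rewrite hc => -[].
  have cb : c = kc r2 b by have := xcomp e2 hb; rewrite hc => -[].
  have sa : ks r1 = kr a.
    by have [_ x1] := xrs e1; have [x2 _] := xrs ha; rewrite x1 in x2; case: x2.
  have sb : ks r2 = kr b.
    by have [_ x1] := xrs e2; have [x2 _] := xrs hb; rewrite x1 in x2; case: x2.
  have inL : Lmin r1 r2 (a, b).
    by split => //=; [rewrite -ca -cb | rewrite -ca (kd_x0 hc)].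
  rewrite es in inL.
  by exists (a, b) => //; rewrite /f /= -ca; exact: D1_x0 hc.
move/ultra_union => [[a b] abs fab].
exists (kc r1 a) => //.
have : Lmin r1 r2 (a, b) by rewrite es.
by case.
Qed.

Lemma Gbig q : (forall i, exists2 r, G r & q i <= kd r i) ->
  exists2 r, G r & degk_le q (kd r).
Proof.
move=> h.
suff : forall j, exists2 r, G r & forall i : 'I_k, i < j -> q i <= kd r i.
  by move=> /(_ k) [r Gr hr]; exists r => // i; apply: hr.
elim=> [|j [r Gr hr]]; first by exists v.
case: (ltnP j k) => jk.
  have [r' Gr' hr'] := h (Ordinal jk).
  have [r'' Gr'' e] := Gjoin Gr Gr'.
  exists r'' => // i; rewrite ltnS leq_eqVlt => /orP [/eqP ij | ij];
    rewrite e /degk_join.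
    have -> : i = Ordinal jk by apply: val_inj.
    exact: leq_trans hr' (leq_maxr _ _).
  exact: leq_trans (hr i ij) (leq_maxl _ _).
exists r => // i; rewrite ltnS => ij; apply: hr; exact: leq_trans (ltn_ord i) jk.
Qed.

Definition Sp (i : 'I_k) (n : nat) := exists2 r, G r & kd r i = n.

Definition mdeg : extdeg k := fun i =>
  match pselect (exists n : nat, Sp i n /\ forall r, G r -> kd r i <= n) with
  | left e => Some (projT1 (cid e))
  | right _ => None
  end.

Lemma mdegP_i i (n : nat) :
  (match mdeg i with Some mi => n <= mi | None => true end : bool) <->
  exists2 r, G r & n <= kd r i.
Proof.
rewrite /mdeg; case: pselect => [e|ne].
  case: (cid e) => /= mi [[r Gr er] ub]; split.
    by move=> nm; exists r => //; rewrite er.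
  by case=> r0 Gr0 nr; exact: leq_trans nr (ub r0 Gr0).
split => // _.
apply: contrapT => nex.
have ub : forall r, G r -> kd r i < n.
  move=> r Gr; rewrite ltnNge; apply/negP => nr; apply: nex; by exists r.
apply: ne.
have exP : exists m, `[< Sp i m >].
  by exists (kd v i); apply/asboolP; exists v.
have ubP : forall m, `[< Sp i m >] -> m <= n.
  by move=> m /asboolP [r Gr <-]; exact: ltnW (ub r Gr).
case: (ex_maxnP exP ubP) => mx /asboolP Smx mxmax.
exists mx; split => // r Gr; apply: mxmax; apply/asboolP; by exists r.
Qed.

Lemma mdegP q : degk_le_ext q mdeg <-> exists2 r, G r & degk_le q (kd r).
Proof.
split.
  by move=> h; apply: Gbig => i; apply/mdegP_i; exact: h.
by move=> [r Gr qr] i; apply/mdegP_i; exists r.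
Qed.

Definition W p q l := exists r y,
  [/\ G r, D1 r y, degk_le q (kd r), degk_le p q & xfun y p q = Some l].

Lemma W_uniq p q l l' : W p q l -> W p q l' -> l = l'.
Proof.
move=> [r1 [y1 [G1 D1y1 q1 pq e1]]] [r2 [y2 [G2 D2y2 q2 _ e2]]].
have [w [/D1E [_ w1] /D1E [_ w2]]] := Gcommon G1 G2.
move: D1y1 D2y2 => /D1E [_ y1r] /D1E [_ y2r].
have E1 := Sg y1r w1 pq q1; have E2 := Sg y2r w2 pq q2.
rewrite e1 in E1; rewrite e2 -E1 in E2.
by case: E2 => ->.
Qed.

Definition xf p q : option L :=
  match pselect (exists l, W p q l) with
  | left e => Some (projT1 (cid e))
  | right _ => None
  end.

Lemma xfE p q l : xf p q = Some l <-> W p q l.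
Proof.
rewrite /xf; case: pselect => [e|ne].
  case: (cid e) => /= l0 Wl0; split => [[<-] //| Wl].
  by rewrite (W_uniq Wl0 Wl).
by split => // Wl; exfalso; apply: ne; exists l.
Qed.

Lemma xpathX : is_kpath (mdeg, xf).
Proof.
split.
- move=> p q; split.
  + move=> [l /xfE [r [y [Gr _ qr pq _]]]]; split => //; apply/mdegP; by exists r.
  + move=> [pq /mdegP [r Gr qr]].
    have [y Dy] := Gne Gr.
    have /D1E [dr yr] := Dy.
    have [l hl] : exists l, xfun y p q = Some l.
      by apply/xdefP; split => //; exact: le_ext_trans qr dr.
    by exists l; apply/xfE; exists r, y; split.
- by move=> p q l /xfE [r [y [_ _ _ _ e]]]; exact: xdeg_kd e.
- move=> p q l /xfE [r [y [Gr Dy qr pq e]]]; have [e1 e2] := xrs e.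
  split; apply/xfE; exists r, y; split => //.
  exact: le_trans pq qr.
- move=> p q t a b /xfE [r1 [y1 [G1 D1y q1 pq e1]]] /xfE [r2 [y2 [G2 D2y t2 qt e2]]].
  have [w [Dw1 Dw2]] := Gcommon G1 G2.
  move: (D1y) (D2y) (Dw1) (Dw2) => /D1E [_ y1r] /D1E [_ y2r] /D1E [_ w1] /D1E [_ w2].
  have E1 := Sg y1r w1 pq q1; have E2 := Sg y2r w2 qt t2.
  rewrite e1 in E1; rewrite e2 in E2.
  apply/xfE; exists r2, w; split => //; first exact: le_trans pq qt.
  exact: xcomp (esym E1) (esym E2).
Qed.

Definition X : XL L := XPath xpathX.

Lemma keyX (mu : L) : G mu <-> D1 mu X.
Proof.
split.
- move=> Gm; apply/D1E; split.
    by apply/mdegP; exists mu => //; exact: le_refl.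
  apply/xfE; have [y Dy] := Gne Gm; have /D1E [_ e] := Dy.
  by exists mu, y; split => //; exact: le_refl.
- move=> /D1E [_ /xfE [r [y [Gr Dy mr _ e]]]].
  rewrite /G; apply: filterS Gr => z /D1E [dz ez].
  move: Dy => /D1E [_ yr].
  apply/D1E; split; first exact: le_ext_trans mr dz.
  by rewrite (Sg ez yr (le0 _) mr).
Qed.

Lemma cvgX : U --> X.
Proof.
move=> A /nbhs_sub [E [sE [EX EA]]].
change (U A).
apply: (@filterS _ U _ _ _ EA); apply: filter_bigI => i iE.
have := EX i iE.
have /set_mem [b [F [ei SF]]] := sE i iE; subst i.
clear iE; case: b => h.
  have /DFE [lm lF /keyX Gl] : DF F X := h.
  by apply: filterS Gl => y Dy; apply/DFE; exists lm.
have h' : ~ DF F X := h.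
change (U (~` DF F)).
apply: filterS (ultra_inter (s := F) (f := fun lm => ~` D1 lm.2) _) => [y hy|lm lF].
  by move=> /DFE [lm lF Dy]; exact: hy lm lF Dy.
case: (in_ultra_setVsetC (D1 lm.2) UU) => // /keyX Dl.
by exfalso; apply: h'; apply/DFE; exists lm.
Qed.

Lemma exists_limit : exists x, D1 v x /\ U --> x.
Proof. by exists X; split; [apply/keyX | exact: cvgX]. Qed.

End Compact.
Lemma D1_compact (k : nat) (L : kgraph k) (FA : finitely_aligned L) (v : L) :
  compact (D1 v).
Proof.
rewrite compact_ultra => U UU Uv.
have [x [Dx cx]] := exists_limit FA UU Uv.
by exists x.
Qed.

Theorem proposition5p7 (k : nat) (L : kgraph k) :
  finitely_aligned L ->
  (forall v : L, vertex v ->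
     DF [:: (v, v)] = [set x : XL L | xrange_is x v] /\
     compact (DF [:: (v, v)] : set (XL L))) /\
  hausdorff_space (XL L) /\ locally_compact [set: XL L].
Proof.
move=> FA.
have hd : hausdorff_space (XL L) := @hausdorffX k L.
split; last split => //.
  move=> v hv; split; last exact: D1_compact FA v.
  have kv : kd v = @degk0 k by apply/funext => i; exact: hv.
  apply/predeqP => x; split.
    by move/D1E => [_]; rewrite kv.
  move=> e; apply/D1E; rewrite kv; split => //.
  have : exists l, xfun x (@degk0 k) (@degk0 k) = Some l by exists v.
  by move/xdefP => [].
move=> x _.
have [v e] : exists v, xfun x (@degk0 k) (@degk0 k) = Some v.
  by apply/xdefP; split => // i; case: (xdeg x i).
exists (D1 v).
  have Dx := D1_x0 e.
  rewrite /within; apply: filterS (open_nbhs_nbhs (conj (D1_open v) Dx)).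
  by move=> y Dy _.
split; first exact: D1_compact FA v.
apply: compact_closed => //; exact: D1_compact FA v.
Qed.
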